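(* In the Simon urn described in the context, with fixed trigger probability $p\in(0,1)$, for all $n\ge1$, $$\mathbb E[K_{n,1}]=\frac{\Gamma(n+1-p)}{\Gamma(2-p)\,\Gamma(n)},$$ and, as $n\to\infty$, $$\mathbb E[K_{n,1}]=\frac{n^{1-p}}{\Gamma(2-p)}+O\!\left(\frac{1}{n^{p}}\right).$$
   Context: Simon urn. The urn is empty at time $0$. Let $B_0=1$ and let $(B_n)_{n\ge1}$ be i.i.d. Bernoulli random variables with $\Pr(B_n=1)=p\in(0,1)$, independent of everything else. Colors are labelled $1,2,\dots$ in order of first appearance. At each time $n\ge1$: if $B_{n-1}=1$, one ball of a new color is added and registered; if $B_{n-1}=0$, a ball is drawn uniformly at random from the urn, its color is registered, and one additional ball of that color is added. $K_{n,c}$ denotes the number of times color $c$ has been registered up to and including time $n$ (equal to the number of balls of color $c$ at time $n$). $\Gamma$ is the gamma function. *)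

(* Defs.v *)
From Stdlib Require Import Reals List.
From Coquelicot Require Import Coquelicot.
Open Scope R_scope.

Definition Gamma (x : R) : R :=
  RInt_gen (fun t => Rpower t (x - 1) * exp (- t)) (at_right 0) (Rbar_locally p_infty).

Fixpoint incr (s : list nat) (c : nat) : list nat :=
  match s, c with
  | nil, _ => nil
  | x :: s', O => S x :: s'
  | x :: s', S c' => x :: incr s' c'
  end.

(* State of the urn at time n: list of counts, index c-1 = number of balls of color c
   (= K_{n,c}).  Transition from time n to time n+1 given state s (which has n balls):
   - at n = 0, B_0 = 1: a ball of a new color is added;
   - at n >= 1, B_n ~ Bernoulli(p) is independent of the past: with probability p a new
     color is added; with probability 1-p a ball is drawn uniformly among the n balls,
     color c+1 being drawn with probability s_c / n, and its count is incremented. *)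
Definition step (p : R) (n : nat) (s : list nat) : list (R * list nat) :=
  match n with
  | O => (1, s ++ (1%nat :: nil)) :: nil
  | S _ =>
      (p, s ++ (1%nat :: nil)) ::
      map (fun c => ((1 - p) * INR (nth c s O) / INR n, incr s c)) (seq 0 (length s))
  end.

Fixpoint dist (p : R) (n : nat) : list (R * list nat) :=
  match n with
  | O => (1, nil) :: nil
  | S m => flat_map (fun ws => map (fun ws' => (fst ws * fst ws', snd ws'))
                                  (step p m (snd ws))) (dist p m)
  end.

Definition EK1 (p : R) (n : nat) : R :=
  fold_right Rplus 0 (map (fun ws => fst ws * INR (nth 0 (snd ws) O)) (dist p n)).

(* Main.v *)
Require Import Defs.
From Stdlib Require Import Reals List Lia Lra.
From Coquelicot Require Import Coquelicot.
Open Scope R_scope.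

Definition rsum (l : list R) := fold_right Rplus 0 l.

Lemma rsum_app l1 l2 : rsum (l1 ++ l2) = rsum l1 + rsum l2.
Proof. induction l1; simpl; [lra|]. unfold rsum in *; simpl; rewrite IHl1; lra. Qed.

Lemma rsum_flat_map {A B : Type} (g : B -> R) (h : A -> list B) l :
  rsum (map g (flat_map h l)) = rsum (map (fun x => rsum (map g (h x))) l).
Proof.
  induction l; simpl; [reflexivity|]. rewrite map_app, rsum_app, IHl. reflexivity.
Qed.

Lemma rsum_scal {A : Type} (c : R) (f : A -> R) l :
  rsum (map (fun x => c * f x) l) = c * rsum (map f l).
Proof. induction l; unfold rsum in *; simpl; [ring|]. rewrite IHl; ring. Qed.

Lemma rsum_ext_in {A : Type} (f g : A -> R) l :
  (forall x, In x l -> f x = g x) -> rsum (map f l) = rsum (map g l).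
Proof.
  induction l; intros H; simpl; [reflexivity|]. unfold rsum in *; simpl.
  rewrite H by (left; reflexivity). rewrite IHl; [reflexivity|].
  intros; apply H; right; assumption.
Qed.

Lemma incr_length s c : length (incr s c) = length s.
Proof. revert c; induction s; intros [|c]; simpl; auto. Qed.

Lemma incr_sum s c : (c < length s)%nat -> list_sum (incr s c) = S (list_sum s).
Proof.
  revert c; induction s; intros [|c] Hc; simpl in *; try lia.
  rewrite IHs by lia. lia.
Qed.

Definition Inv (m : nat) (s : list nat) := list_sum s = m /\ ((1 <= m)%nat -> s <> nil).

Lemma dist_inv p m : forall ws, In ws (Defs.dist p m) -> Inv m (snd ws).
Proof.
  induction m; intros ws H.
  - simpl in H. destruct H as [H|[]]. subst. split; simpl; auto. lia.
  - simpl in H. apply in_flat_map in H. destruct H as [ws0 [H0 H1]].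
    apply in_map_iff in H1. destruct H1 as [ws' [E H1]]. subst ws. simpl.
    destruct (IHm ws0 H0) as [S0 N0].
    destruct m as [|m'].
    + simpl in H1. destruct H1 as [H1|[]]. subst ws'. simpl. split.
      * rewrite list_sum_app. simpl. lia.
      * intros _ E. destruct (snd ws0); discriminate.
    + simpl in H1. destruct H1 as [H1|H1].
      * subst ws'. simpl. split.
        -- rewrite list_sum_app. simpl. lia.
        -- intros _ E. destruct (snd ws0); discriminate.
      * apply in_map_iff in H1. destruct H1 as [c [E Hc]]. subst ws'. simpl.
        apply in_seq in Hc. split.
        -- rewrite incr_sum by lia. lia.
        -- intros _ E. apply (f_equal (@length nat)) in E. rewrite incr_length in E.
           simpl in E. lia.
Qed.

Lemma rsum_nth l : rsum (map (fun c => INR (nth c l O)) (seq 0 (length l))) = INR (list_sum l).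
Proof.
  induction l; [reflexivity|].
  simpl length. cbn [seq]. rewrite <- seq_shift. simpl. rewrite map_map. simpl.
  unfold rsum in *. rewrite IHl. rewrite plus_INR. reflexivity.
Qed.

Lemma step_E p m s : (1 <= m)%nat -> Inv m s ->
  rsum (map (fun ws' => fst ws' * INR (nth 0 (snd ws') O)) (step p m s))
  = INR (nth 0 s O) * (1 + (1 - p) / INR m).
Proof.
  intros Hm [Hs Hn]. specialize (Hn Hm).
  destruct m as [|m]; [lia|]. destruct s as [|x s']; [congruence|].
  unfold step. simpl length. cbn [seq]. rewrite <- seq_shift.
  unfold rsum. cbn [map fold_right fst snd nth incr app]. rewrite !map_map. cbn [fst snd nth incr].
  assert (E : rsum (map (fun x0 => (1 - p) * INR (nth x0 s' O) / INR (S m) * INR x) (seq 0 (length s')))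
    = (1 - p) * INR x / INR (S m) * INR (list_sum s')).
  { rewrite <- rsum_nth. rewrite <- rsum_scal. apply rsum_ext_in. intros. field.
    apply not_0_INR; lia. }
  unfold rsum in E. rewrite E. simpl in Hs.
  assert (INR (S m) = INR x + INR (list_sum s')) by (rewrite <- plus_INR; f_equal; lia).
  assert (INR (S m) <> 0) by (apply not_0_INR; lia).
  rewrite (S_INR x). replace (INR (list_sum s')) with (INR (S m) - INR x) by lra. field. assumption.
Qed.

Lemma EK1_S p m : (1 <= m)%nat -> EK1 p (S m) = (1 + (1 - p) / INR m) * EK1 p m.
Proof.
  intros Hm. unfold EK1. change (fold_right Rplus 0) with rsum.
  simpl Defs.dist. rewrite rsum_flat_map.
  rewrite (rsum_ext_in _ (fun ws => (1 + (1 - p) / INR m) * (fst ws * INR (nth 0 (snd ws) O)))).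
  - apply rsum_scal.
  - intros ws Hws. rewrite map_map. simpl.
    rewrite (rsum_ext_in _ (fun ws' => fst ws * (fst ws' * INR (nth 0 (snd ws') O)))).
    + rewrite rsum_scal. rewrite step_E; auto. ring. apply (dist_inv p m); auto.
    + intros; simpl; ring.
Qed.

Lemma EK1_1 p : EK1 p 1 = 1.
Proof. unfold EK1. simpl. ring. Qed.

Lemma ballR x e y : ball x e y <-> Rabs (y - x) < e.
Proof. unfold ball; simpl. unfold AbsRing_ball, abs, minus, plus, opp; simpl. tauto. Qed.

Lemma ex_gen_mono (f : R -> R) (M : R) :
  (forall t, 0 < t -> continuous f t) -> (forall t, 0 < t -> 0 <= f t) ->
  (forall a b, 0 < a <= b -> RInt f a b <= M) ->
  exists L, is_RInt_gen f (at_right 0) (Rbar_locally p_infty) L /\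
            (forall a b, 0 < a <= b -> RInt f a b <= L).
Proof.
  intros Hc Hp HM.
  assert (Hex : forall a b, 0 < a -> 0 < b -> ex_RInt f a b).
  { intros a b Ha Hb. apply (@ex_RInt_continuous R_CompleteNormedModule). intros z Hz. apply Hc.
    destruct Hz as [Hz _]. eapply Rlt_le_trans; [|exact Hz].
    unfold Rmin; destruct Rle_dec; lra. }
  set (E := fun y => exists a b, 0 < a <= b /\ y = RInt f a b).
  assert (HB : bound E). { exists M. intros y [a [b [Hab ->]]]. apply HM; auto. }
  assert (HE : exists y, E y). { exists (RInt f 1 1). exists 1, 1. split; [lra|auto]. }
  destruct (completeness E HB HE) as [L [HL1 HL2]].
  assert (Hup : forall a b, 0 < a <= b -> RInt f a b <= L).
  { intros a b Hab. apply HL1. exists a, b. split; auto. }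
  exists L. split; [|exact Hup].
  unfold is_RInt_gen. apply filterlimi_locally. intros eps.
  assert (Hx : exists a0 b0, 0 < a0 <= b0 /\ L - eps < RInt f a0 b0).
  { destruct (Rlt_dec (L - eps) L) as [_|]; [|destruct eps; simpl in *; lra].
    apply Classical_Prop.NNPP. intros Hn.
    assert (L <= L - eps); [|destruct eps; simpl in *; lra].
    apply HL2. intros y [a [b [Hab ->]]]. apply Rnot_lt_le. intros Hlt.
    apply Hn. exists a, b. auto. }
  destruct Hx as [a0 [b0 [Hab0 Hlt]]].
  apply (Filter_prod _ _ _ (fun a => 0 < a < a0) (fun b => b0 < b)).
  - exists (mkposreal a0 (proj1 Hab0)). intros y Hy Hy0. split; auto.
    apply ballR in Hy. apply Rabs_lt_between in Hy. change (minus y 0) with (y - 0) in Hy. simpl in Hy. lra.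
  - exists b0. auto.
  - intros a b Ha Hb. simpl. exists (RInt f a b). split.
    + apply (@RInt_correct R_CompleteNormedModule), Hex; lra.
    + apply ballR. assert (RInt f a b <= L) by (apply Hup; lra).
      assert (RInt f a0 b0 <= RInt f a b).
      { rewrite <- (@RInt_Chasles R_CompleteNormedModule f a a0 b) by (apply Hex; lra).
        rewrite <- (@RInt_Chasles R_CompleteNormedModule f a0 b0 b) by (apply Hex; lra).
        assert (0 <= RInt f a a0).
        { apply RInt_ge_0; [lra| apply Hex; lra|]. intros; apply Hp; lra. }
        assert (0 <= RInt f b0 b).
        { apply RInt_ge_0; [lra| apply Hex; lra|]. intros; apply Hp; lra. }
        change plus with Rplus. simpl. unfold plus; simpl. lra. }
      apply Rabs_lt_between. lra.
Qed.

Lemma gen_from_prim (F H : R -> R) la lb :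
  (forall a b, 0 < a -> 0 < b -> is_RInt F a b (H b - H a)) ->
  filterlim H (at_right 0) (locally la) ->
  filterlim H (Rbar_locally p_infty) (locally lb) ->
  is_RInt_gen F (at_right 0) (Rbar_locally p_infty) (lb - la).
Proof.
  intros HI Ha Hb. unfold is_RInt_gen. apply filterlimi_locally. intros eps.
  assert (He : 0 < eps / 2) by (destruct eps; simpl; lra).
  apply filterlim_locally with (eps := mkposreal _ He) in Ha.
  apply filterlim_locally with (eps := mkposreal _ He) in Hb.
  assert (Ha' : at_right 0 (fun a => 0 < a /\ ball la (eps/2) (H a))).
  { apply filter_and; [|exact Ha]. exists (mkposreal 1 Rlt_0_1). auto. }
  assert (Hb' : Rbar_locally p_infty (fun b => 0 < b /\ ball lb (eps/2) (H b))).
  { apply filter_and; [|exact Hb]. exists 0. auto. }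
  apply (Filter_prod _ _ _ _ _ Ha' Hb').
  intros a b [Ha0 Ha1] [Hb0 Hb1]. simpl. exists (H b - H a). split; [apply HI; auto|].
  apply (proj1 (ballR _ _ _)) in Ha1. apply (proj1 (ballR _ _ _)) in Hb1. apply ballR.
  replace (H b - H a - (lb - la)) with ((H b - lb) - (H a - la)) by ring.
  eapply Rle_lt_trans; [apply Rabs_triang|]. rewrite Rabs_Ropp.
  destruct eps; simpl in *; lra.
Qed.

Definition gi (x t : R) := Rpower t (x - 1) * exp (- t).

Lemma Gamma_gi x : Gamma x = RInt_gen (gi x) (at_right 0) (Rbar_locally p_infty).
Proof. reflexivity. Qed.

Lemma gi_pos x t : 0 < gi x t.
Proof. unfold gi, Rpower. apply Rmult_lt_0_compat; apply exp_pos. Qed.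

Lemma gi_cont x t : 0 < t -> continuous (gi x) t.
Proof.
  intros Ht. apply (@ex_derive_continuous R_AbsRing R_NormedModule). unfold gi. apply ex_derive_mult.
  - exists ((x-1) * Rpower t (x-1-1)). apply is_derive_Reals, derivable_pt_lim_power; auto.
  - auto_derive; auto.
Qed.

Lemma exp_le_mono a b : a <= b -> exp a <= exp b.
Proof. intros [H|H]; [apply Rlt_le, exp_increasing; auto | subst; lra]. Qed.

Lemma ln_le_sub1 y : 0 < y -> ln y <= y - 1.
Proof. intros Hy. pose proof (exp_ineq1_le (ln y)). rewrite exp_ln in H; lra. Qed.

Lemma key_ineq x t : 0 < x -> 0 < t -> - t <= (x+1) * ln (x+1) - (x+1) * ln (1+t).
Proof.
  intros Hx Ht.
  assert (H := ln_le_sub1 ((1+t) * / (x+1))).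
  rewrite ln_mult, ln_Rinv in H by (try apply Rinv_0_lt_compat; lra).
  assert (H' : (x+1) * (ln (1+t) + - ln (x+1)) <= (x+1) * ((1 + t) * / (x + 1) - 1)).
  { apply Rmult_le_compat_l; [lra|]. apply H. apply Rmult_lt_0_compat; [lra|].
    apply Rinv_0_lt_compat; lra. }
  replace ((x+1) * ((1 + t) * / (x + 1) - 1)) with (t - x) in H' by (field; lra).
  nra.
Qed.

Definition Kc x := exp ((x+1) * ln (x+1)).

Lemma gi_le_bound x t : 0 < x -> 0 < t ->
  gi x t <= Kc x * exp ((x-1) * ln t - (x+1) * ln (1+t)).
Proof.
  intros Hx Ht. unfold gi, Kc, Rpower. rewrite <- !exp_plus. apply exp_le_mono.
  pose proof (key_ineq x t Hx Ht). lra.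
Qed.

Lemma gi_int_bound x a b : 0 < x -> 0 < a <= b -> RInt (gi x) a b <= Kc x / x.
Proof.
  intros Hx Hab.
  set (g := fun t => Kc x * exp ((x-1) * ln t - (x+1) * ln (1+t))).
  set (G := fun t => Kc x * exp (x * (ln t - ln (1+t))) / x).
  assert (HG : forall t, 0 < t -> is_derive G t (g t)).
  { intros t Ht. unfold G, g. auto_derive; [lra|].
    replace ((x-1) * ln t - (x+1) * ln (1+t)) with (x * (ln t - ln (1+t)) + - ln t + - ln (1+t)) by ring.
    rewrite !exp_plus, !exp_Ropp, !exp_ln by lra. replace (ln t + - ln (1+t)) with (ln t - ln (1+t)) by ring. field. lra. }
  assert (Hgc : forall t, 0 < t -> continuous g t).
  { intros t Ht. apply (@ex_derive_continuous R_AbsRing R_NormedModule). unfold g. auto_derive. lra. }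
  assert (HI : is_RInt g a b (G b - G a)).
  { apply (@is_RInt_derive R_CompleteNormedModule G g a b).
    - intros t Ht. apply HG. unfold Rmin in Ht; destruct Rle_dec; lra.
    - intros t Ht. apply Hgc. unfold Rmin in Ht; destruct Rle_dec; lra. }
  apply Rle_trans with (RInt g a b).
  - apply RInt_le; [lra| | |].
    + apply (@ex_RInt_continuous R_CompleteNormedModule). intros z Hz. apply gi_cont.
      unfold Rmin in Hz; destruct Rle_dec; lra.
    + exists (G b - G a). exact HI.
    + intros t Ht. apply gi_le_bound; lra.
  - rewrite (is_RInt_unique _ _ _ _ HI). unfold G.
    assert (0 <= Kc x * exp (x * (ln a - ln (1 + a))) / x).
    { unfold Kc. apply Rmult_le_pos; [|left; apply Rinv_0_lt_compat; lra].
      apply Rmult_le_pos; left; apply exp_pos. }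
    assert (exp (x * (ln b - ln (1 + b))) <= 1).
    { apply Rle_trans with (exp 0); [|rewrite exp_0; lra]. apply exp_le_mono.
      assert (ln b < ln (1+b)) by (apply ln_increasing; lra). nra. }
    assert (Kc x * exp (x * (ln b - ln (1 + b))) / x <= Kc x / x).
    { unfold Rdiv. apply Rmult_le_compat_r; [left; apply Rinv_0_lt_compat; lra|].
      rewrite <- (Rmult_1_r (Kc x)) at 2. apply Rmult_le_compat_l; auto.
      unfold Kc; left; apply exp_pos. }
    lra.
Qed.

Lemma gamma_ok x : 0 < x ->
  is_RInt_gen (gi x) (at_right 0) (Rbar_locally p_infty) (Gamma x) /\
  (forall a b, 0 < a <= b -> RInt (gi x) a b <= Gamma x).
Proof.
  intros Hx.
  destruct (ex_gen_mono (gi x) (Kc x / x)) as [L [HL1 HL2]].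
  - apply gi_cont.
  - intros; left; apply gi_pos.
  - intros; apply gi_int_bound; auto.
  - assert (E : Gamma x = L).
    { rewrite Gamma_gi. apply (is_RInt_gen_unique (gi x) L HL1). }
    rewrite E. auto.
Qed.

Lemma Gamma_pos x : 0 < x -> 0 < Gamma x.
Proof.
  intros Hx. destruct (gamma_ok x Hx) as [_ H].
  apply Rlt_le_trans with (RInt (gi x) 1 2); [|apply H; lra].
  apply RInt_gt_0; [lra| intros; apply gi_pos |].
  intros; apply gi_cont; lra.
Qed.

Lemma Gamma_succ x : 0 < x -> Gamma (x + 1) = x * Gamma x.
Proof.
  intros Hx.
  set (h := fun t => Rpower t x * exp (- t)).
  set (df := fun t => x * gi x t - gi (x + 1) t).
  assert (Hd : forall t, 0 < t -> is_derive h t (df t)).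
  { intros t Ht.
    assert (D1 : is_derive (fun u => Rpower u x) t (x * Rpower t (x-1)))
      by (apply is_derive_Reals, derivable_pt_lim_power; lra).
    assert (D2 : is_derive (fun u => exp (- u)) t (- exp (- t)))
      by (auto_derive; auto; ring).
    pose proof (is_derive_mult _ _ _ _ _ D1 D2 Rmult_comm) as D.
    assert (E : df t = plus (mult (x * Rpower t (x-1)) (exp (-t))) (mult (Rpower t x) (- exp (-t)))).
    { unfold df, gi, plus, mult; simpl. replace (x + 1 - 1) with x by ring. ring. }
    rewrite E. exact D. }
  assert (Hc : forall t, 0 < t -> continuous df t).
  { intros t Ht.
    exact (@continuous_minus R_UniformSpace R_AbsRing R_NormedModule
             (fun t => scal x (gi x t)) (gi (x+1)) t
             (continuous_scal_r x (gi x) t (gi_cont x t Ht)) (gi_cont (x+1) t Ht)). }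
  assert (HI : forall a b, 0 < a -> 0 < b -> is_RInt df a b (h b - h a)).
  { intros a b Ha Hb. apply (@is_RInt_derive R_CompleteNormedModule h df a b).
    - intros t Ht. apply Hd. unfold Rmin in Ht; destruct Rle_dec; lra.
    - intros t Ht. apply Hc. unfold Rmin in Ht; destruct Rle_dec; lra. }
  assert (L0 : filterlim h (at_right 0) (locally 0)).
  { apply filterlim_locally. intros eps.
    assert (Hd0 : 0 < Rpower eps (/ x)) by (unfold Rpower; apply exp_pos).
    exists (mkposreal _ Hd0). intros y Hy Hy0. simpl in Hy.
    apply (proj1 (ballR _ _ _)) in Hy. change (minus y 0) with (y - 0) in Hy.
    apply ballR. unfold h, Rpower in *.
    rewrite Rminus_0_r in *. rewrite Rabs_pos_eq in Hy by lra.
    assert (Hl : ln y < / x * ln eps).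
    { rewrite <- (ln_exp (/ x * ln eps)). apply ln_increasing; lra. }
    assert (x * ln y < ln eps).
    { apply Rmult_lt_compat_l with (r := x) in Hl; auto.
      rewrite <- Rmult_assoc, Rinv_r, Rmult_1_l in Hl; lra. }
    assert (exp (x * ln y) < eps).
    { rewrite <- (exp_ln eps) by (destruct eps; auto). apply exp_increasing; auto. }
    assert (exp (- y) < 1) by (rewrite <- exp_0; apply exp_increasing; lra).
    pose proof (exp_pos (x * ln y)). pose proof (exp_pos (- y)).
    rewrite Rabs_pos_eq by nra. nra. }
  assert (Linf : filterlim h (Rbar_locally p_infty) (locally 0)).
  { apply filterlim_locally. intros eps.
    exists (Kc x / eps). intros y Hy.
    assert (HK : 0 < Kc x) by apply exp_pos.
    assert (Hy0 : 0 < y).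
    { eapply Rle_lt_trans; [|exact Hy]. apply Rlt_le.
      apply Rdiv_lt_0_compat; auto. destruct eps; auto. }
    apply ballR. rewrite Rminus_0_r. unfold h, Rpower.
    rewrite <- exp_plus. rewrite Rabs_pos_eq by (left; apply exp_pos).
    pose proof (key_ineq x y Hx Hy0).
    assert (ln y < ln (1 + y)) by (apply ln_increasing; lra).
    apply Rle_lt_trans with (exp ((x + 1) * ln (x + 1) + - ln (1 + y))).
    { apply exp_le_mono. nra. }
    rewrite exp_plus, exp_Ropp, exp_ln by lra. fold (Kc x).
    apply Rmult_lt_compat_r with (r := eps) in Hy; [|destruct eps; auto].
    unfold Rdiv in Hy. rewrite Rmult_assoc, Rinv_l, Rmult_1_r in Hy by (destruct eps; simpl; lra).
    apply Rlt_le_trans with (Kc x * / y).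
    - apply Rmult_lt_compat_l; auto. apply Rinv_lt_contravar; nra.
    - apply Rmult_le_reg_r with y; auto. rewrite Rmult_assoc, Rinv_l, Rmult_1_r by lra.
      lra. }
  pose proof (gen_from_prim df h 0 0 HI L0 Linf) as G0.
  destruct (gamma_ok x Hx) as [Gx _].
  destruct (gamma_ok (x+1) ltac:(lra)) as [Gx1 _].
  pose proof (is_RInt_gen_minus _ _ _ _ (is_RInt_gen_scal _ x _ Gx) Gx1) as G1.
  apply (@is_RInt_gen_unique R_CompleteNormedModule (at_right 0) (Rbar_locally p_infty) _ _) in G0. apply (@is_RInt_gen_unique R_CompleteNormedModule (at_right 0) (Rbar_locally p_infty) _ _) in G1.
  assert (E : minus (scal x (Gamma x)) (Gamma (x+1)) = 0 - 0) by (etransitivity; [symmetry; exact G1| exact G0]).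
  unfold minus, plus, opp, scal in E; simpl in E. unfold mult in E; simpl in E. lra.
Qed.

Lemma gi1 t : gi 1 t = exp (- t).
Proof. unfold gi, Rpower. replace (1 - 1) with 0 by ring. rewrite Rmult_0_l, exp_0. ring. Qed.

Lemma Gamma_1 : Gamma 1 = 1.
Proof.
  set (h := fun t => - exp (- t)).
  assert (HI : forall a b, 0 < a -> 0 < b -> is_RInt (gi 1) a b (h b - h a)).
  { intros a b Ha Hb. apply (@is_RInt_derive R_CompleteNormedModule h (gi 1) a b).
    - intros t Ht. rewrite gi1. unfold h. auto_derive; auto. ring.
    - intros t Ht. apply gi_cont. unfold Rmin in Ht; destruct Rle_dec; lra. }
  assert (L0 : filterlim h (at_right 0) (locally (-1))).
  { apply filterlim_locally. intros eps.
    exists eps. intros y Hy Hy0.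
    apply (proj1 (ballR _ _ _)) in Hy. change (minus y 0) with (y - 0) in Hy.
    apply ballR. unfold h. rewrite Rminus_0_r in Hy. rewrite Rabs_pos_eq in Hy by lra.
    pose proof (exp_ineq1_le (- y)).
    assert (exp (- y) < 1) by (rewrite <- exp_0; apply exp_increasing; lra).
    rewrite Rabs_pos_eq by lra. lra. }
  assert (Linf : filterlim h (Rbar_locally p_infty) (locally 0)).
  { apply filterlim_locally. intros eps.
    exists (/ eps). intros y Hy.
    assert (He : 0 < eps) by (destruct eps; auto).
    assert (Hy0 : 0 < y) by (eapply Rlt_trans; [apply Rinv_0_lt_compat, He|exact Hy]).
    apply ballR. rewrite Rminus_0_r. unfold h.
    rewrite Rabs_Ropp, Rabs_pos_eq by (left; apply exp_pos).
    pose proof (exp_ineq1_le y). rewrite exp_Ropp.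
    apply Rlt_le_trans with (/ y).
    - apply Rinv_lt_contravar; nra.
    - rewrite <- (Rinv_inv eps). apply Rlt_le, Rinv_lt_contravar; auto.
      apply Rmult_lt_0_compat; auto. apply Rinv_0_lt_compat; auto. }
  pose proof (gen_from_prim (gi 1) h (-1) 0 HI L0 Linf) as G0.
  apply (@is_RInt_gen_unique R_CompleteNormedModule (at_right 0) (Rbar_locally p_infty) _ _) in G0. rewrite Gamma_gi, G0. ring.
Qed.

Lemma exp_conv u v s : 0 <= s <= 1 ->
  exp ((1 - s) * u + s * v) <= (1 - s) * exp u + s * exp v.
Proof.
  intros Hs. set (m := (1 - s) * u + s * v).
  assert (Hu : exp m * (1 + (u - m)) <= exp u).
  { replace (exp u) with (exp m * exp (u - m)) by (rewrite <- exp_plus; f_equal; ring).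
    apply Rmult_le_compat_l; [left; apply exp_pos| apply exp_ineq1_le]. }
  assert (Hv : exp m * (1 + (v - m)) <= exp v).
  { replace (exp v) with (exp m * exp (v - m)) by (rewrite <- exp_plus; f_equal; ring).
    apply Rmult_le_compat_l; [left; apply exp_pos| apply exp_ineq1_le]. }
  assert (E : (1 - s) * (exp m * (1 + (u - m))) + s * (exp m * (1 + (v - m))) = exp m)
    by (unfold m; ring).
  assert (0 <= 1 - s) by lra.
  pose proof (Rmult_le_compat_l _ _ _ H Hu). pose proof (Rmult_le_compat_l s _ _ (proj1 Hs) Hv).
  lra.
Qed.

Lemma Gamma_logconv x s : 0 < x -> 0 < s < 1 -> Gamma (x + s) <= Rpower x s * Gamma x.
Proof.
  intros Hx Hs.
  destruct (gamma_ok x Hx) as [Gx _].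
  destruct (gamma_ok (x+1) ltac:(lra)) as [Gx1 _].
  destruct (gamma_ok (x+s) ltac:(lra)) as [Gxs _].
  pose proof (is_RInt_gen_scal _ (Rpower x s) _
    (is_RInt_gen_plus _ _ _ _ (is_RInt_gen_scal _ (1 - s) _ Gx) (is_RInt_gen_scal _ (s / x) _ Gx1))) as Gg.
  assert (Hn := @RInt_gen_norm R_CompleteNormedModule (at_right 0) (Rbar_locally p_infty) _ _ (gi (x + s))
     (fun y => scal (Rpower x s) (plus (scal (1 - s) (gi x y)) (scal (s / x) (gi (x+1) y))))
     (Gamma (x + s)) (scal (Rpower x s) (plus (scal (1 - s) (Gamma x)) (scal (s / x) (Gamma (x+1)))))).
  assert (Hle : norm (Gamma (x + s)) <= scal (Rpower x s) (plus (scal (1 - s) (Gamma x)) (scal (s / x) (Gamma (x+1))))).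
  { apply Hn; [| |exact Gxs| exact Gg].
    - apply (Filter_prod _ _ _ (fun a => 0 < a < 1) (fun b => 1 < b)).
      + exists (mkposreal 1 Rlt_0_1). intros y Hy Hy0. split; auto.
        apply (proj1 (ballR _ _ _)) in Hy. change (minus y 0) with (y - 0) in Hy.
        simpl in Hy. rewrite Rminus_0_r, Rabs_pos_eq in Hy; lra.
      + exists 1. auto.
      + intros a b Ha Hb. simpl. lra.
    - apply (Filter_prod _ _ _ (fun a => 0 < a) (fun b => True)).
      + exists (mkposreal 1 Rlt_0_1). auto.
      + exists 0. auto.
      + intros a b Ha _ t [Ht _]. simpl in Ht. assert (Ht0 : 0 < t) by lra.
        unfold norm, scal, plus, mult; simpl. unfold abs; simpl. unfold mult; simpl.
        rewrite Rabs_pos_eq by (left; apply gi_pos).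
        unfold gi, Rpower.
        set (A := exp (s * ln x)). set (B := exp ((x - 1) * ln t)). set (Et := exp (- t)).
        assert (E1 : exp ((x + s - 1) * ln t) = exp (s * ln t) * B)
          by (unfold B; rewrite <- exp_plus; f_equal; ring).
        assert (E2 : exp ((x + 1 - 1) * ln t) = t * B).
        { unfold B. replace ((x + 1 - 1) * ln t) with (ln t + (x - 1) * ln t) by ring.
          rewrite exp_plus, exp_ln; auto. }
        assert (E3 : exp (s * ln x + ln t + - ln x) = A * t / x).
        { unfold A. rewrite !exp_plus, exp_Ropp, !exp_ln by auto. field. lra. }
        assert (C := exp_conv (s * ln x) (s * ln x + ln t + - ln x) s ltac:(lra)).
        replace ((1 - s) * (s * ln x) + s * (s * ln x + ln t + - ln x)) with (s * ln t) in C by ring.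
        rewrite E3 in C. fold A in C.
        rewrite E1, E2.
        assert (HB : 0 < B * Et) by (unfold B, Et; apply Rmult_lt_0_compat; apply exp_pos).
        apply Rmult_le_compat_r with (r := B * Et) in C; [|lra].
        replace (A * ((1 - s) * (B * Et) + s / x * (t * B * Et))) with (((1 - s) * A + s * (A * t / x)) * (B * Et))
          by (field; lra).
        replace (exp (s * ln t) * B * Et) with (exp (s * ln t) * (B * Et)) by ring. exact C. }
  unfold norm, scal, plus, mult in Hle; simpl in Hle. unfold abs, mult in Hle; simpl in Hle.
  rewrite Gamma_succ in Hle by auto.
  pose proof (Rle_abs (Gamma (x + s))).
  replace (Rpower x s * ((1 - s) * Gamma x + s / x * (x * Gamma x))) with (Rpower x s * Gamma x) in Hle
    by (field; lra).
  lra.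
Qed.

Lemma EK1_Gamma p : 0 < p < 1 -> forall n, (1 <= n)%nat ->
  EK1 p n * (Gamma (2 - p) * Gamma (INR n)) = Gamma (INR n + 1 - p).
Proof.
  intros hp n Hn. induction n as [|n IH]; [lia|].
  destruct n as [|n].
  - rewrite EK1_1. replace (INR 1) with 1 by reflexivity. rewrite Gamma_1.
    replace (1 + 1 - p) with (2 - p) by ring. ring.
  - rewrite EK1_S by lia. specialize (IH ltac:(lia)).
    assert (Hm : 0 < INR (S n)) by (apply lt_0_INR; lia).
    rewrite (S_INR (S n)). set (m := INR (S n)) in *.
    rewrite Gamma_succ by lra.
    replace (m + 1 + 1 - p) with ((m + 1 - p) + 1) by ring.
    rewrite Gamma_succ by lra. rewrite <- IH. field. lra.
Qed.

Theorem corollary4p1 (p : R) (hp : 0 < p < 1) :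
  (forall n : nat, (1 <= n)%nat ->
     EK1 p n = Gamma (INR n + 1 - p) / (Gamma (2 - p) * Gamma (INR n))) /\
  (exists (C : R) (N : nat), forall n : nat, (N <= n)%nat ->
     Rabs (EK1 p n - Rpower (INR n) (1 - p) / Gamma (2 - p)) <= C / Rpower (INR n) p).
Proof.
  assert (HG2 : 0 < Gamma (2 - p)) by (apply Gamma_pos; lra).
  assert (P1 : forall n : nat, (1 <= n)%nat ->
     EK1 p n = Gamma (INR n + 1 - p) / (Gamma (2 - p) * Gamma (INR n))).
  { intros n Hn. rewrite <- (EK1_Gamma p hp n Hn).
    assert (0 < Gamma (INR n)) by (apply Gamma_pos, lt_0_INR; lia).
    field. lra. }
  split; [exact P1|].
  exists (/ Gamma (2 - p)), 1%nat. intros n Hn. rewrite P1 by auto.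
  assert (Hm1 : 1 <= INR n) by (replace 1 with (INR 1) by reflexivity; apply le_INR; auto).
  set (m := INR n) in *.
  assert (HGn : 0 < Gamma m) by (apply Gamma_pos; lra).
  assert (HGm : 0 < Gamma (m + 1 - p)) by (apply Gamma_pos; lra).
  set (P := Rpower m p). set (Q := Rpower (m + 1 - p) p).
  assert (HP : 0 < P) by (unfold P, Rpower; apply exp_pos).
  assert (HQ : 0 < Q) by (unfold Q, Rpower; apply exp_pos).
  assert (Em : Rpower m (1 - p) = m / P).
  { unfold Rminus. rewrite Rpower_plus, Rpower_1, Rpower_Ropp by lra. reflexivity. }
  assert (Up : Gamma (m + 1 - p) <= m / P * Gamma m).
  { rewrite <- Em. replace (m + 1 - p) with (m + (1 - p)) by ring.
    apply (Gamma_logconv m (1 - p)); lra. }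
  assert (Lo : m * Gamma m <= Q * Gamma (m + 1 - p)).
  { rewrite <- (Gamma_succ m) by lra. replace (Gamma (m + 1)) with (Gamma ((m + 1 - p) + p)) by (f_equal; ring).
    apply (Gamma_logconv (m + 1 - p) p); lra. }
  assert (H3 : m * Q <= P * (m + 1 - p)).
  { unfold P, Q, Rpower.
    replace (m * exp (p * ln (m + 1 - p))) with (exp (ln m + p * ln (m + 1 - p)))
      by (rewrite exp_plus, exp_ln; lra).
    replace (exp (p * ln m) * (m + 1 - p)) with (exp (p * ln m + ln (m + 1 - p)))
      by (rewrite exp_plus, (exp_ln (m + 1 - p)); lra).
    apply exp_le_mono.
    assert (ln m <= ln (m + 1 - p)).
    { destruct (Req_dec p 1); [lra|]. left; apply ln_increasing; lra. }
    nra. }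
  set (r := Gamma (m + 1 - p) / Gamma m).
  assert (Hr1 : r <= m / P).
  { unfold r. apply Rmult_le_reg_r with (Gamma m); auto.
    unfold Rdiv at 1. rewrite Rmult_assoc, Rinv_l, Rmult_1_r by lra. exact Up. }
  assert (A1 : m <= r * Q).
  { unfold r. apply Rmult_le_reg_r with (Gamma m); auto.
    replace (Gamma (m + 1 - p) / Gamma m * Q * Gamma m) with (Q * Gamma (m + 1 - p)) by (field; lra).
    exact Lo. }
  assert (Hr0 : 0 <= r) by (unfold r; apply Rlt_le, Rdiv_lt_0_compat; auto).
  assert (A2 : m * m <= r * P * (m + 1 - p)).
  { apply Rle_trans with (r * (m * Q)).
    - replace (r * (m * Q)) with (m * (r * Q)) by ring. apply Rmult_le_compat_l; lra.
    - replace (r * P * (m + 1 - p)) with (r * (P * (m + 1 - p))) by ring.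
      apply Rmult_le_compat_l; auto. }
  assert (A3 : m - r * P <= 1).
  { set (u := r * P) in *. nra. }
  rewrite Em.
  replace (Gamma (m + 1 - p) / (Gamma (2 - p) * Gamma m) - m / P / Gamma (2 - p))
    with ((r - m / P) * / Gamma (2 - p)) by (unfold r; field; lra).
  rewrite Rabs_mult, (Rabs_pos_eq (/ Gamma (2 - p))) by (left; apply Rinv_0_lt_compat; auto).
  rewrite Rabs_left1 by lra.
  unfold Rdiv. rewrite (Rmult_comm (/ Gamma (2 - p)) (/ P)).
  apply Rmult_le_compat_r; [left; apply Rinv_0_lt_compat; auto|].
  apply Rmult_le_reg_r with P; auto.
  rewrite Rinv_l by lra.
  replace (- (r - m * / P) * P) with (m - r * P) by (field; lra). exact A3.
Qed.
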